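(* Let $A\in\mathbb{R}^{m\times n}$ with $m>n$ and $\mathrm{rank}(A)=n$, $b\in\mathrm{range}(A)$, $c\in\mathbb{R}^n$, and consider the linear program $\min_{x\in\mathbb{R}^n}\{c^\top x: Ax=b\}$, whose unique feasible (hence optimal) point is $x^*=(A^\top A)^{-1}A^\top b$. Let $\eta>0$, $t_0=1$, $y_0=0$, $\lambda_0\in\mathbb{R}^m$ arbitrary, and for $k\ge0$: $$x_{k+1}=\arg\min_{x\in\mathbb{R}^n}\{c^\top x+y_k^\top(Ax-b)+\tfrac\eta2\|Ax-b\|_2^2\}=(A^\top A)^{-1}\big(A^\top b-\tfrac1\eta(A^\top y_k+c)\big),$$ $$\lambda_{k+1}=y_k+\eta(Ax_{k+1}-b),\quad t_{k+1}=\tfrac{1+\sqrt{1+4t_k^2}}{2},\quad y_{k+1}=\lambda_{k+1}+\tfrac{t_k-1}{t_{k+1}}(\lambda_{k+1}-\lambda_k)+\tfrac{t_k}{t_{k+1}}(\lambda_{k+1}-y_k).$$ Then for every $k\ge1$, $\lambda_k$ is an optimal solution of the dual problem $\max\{-b^\top\lambda: A^\top\lambda+c=0\}$, and for every $T\ge1$, $$x_T=x^*-\frac{(-1)^{T-1}}{\eta\,t_{T-1}}(A^\top A)^{-1}c,$$ so that $$|c^\top(x^*-x_T)|=\frac{c^\top(A^\top A)^{-1}c}{\eta\,t_{T-1}},\qquad\|Ax_T-b\|=\frac{\|A(A^\top A)^{-1}c\|}{\eta\,t_{T-1}},$$ for any norm $\|\cdot\|$, where $\frac{T}{2}\le t_{T-1}\le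 T$. In particular, when $c\neq0$ both the primal optimality gap and the feasibility violation are of exact order $1/T$. *)

(* Defs.v *)
From HB Require Import structures.
From mathcomp Require Import all_boot all_order all_algebra.
Set Implicit Arguments. Unset Strict Implicit. Unset Printing Implicit Defensive.
Import Order.TTheory GRing.Theory Num.Theory.
Local Open Scope ring_scope.

Definition dotv (R : rcfType) (k : nat) (u v : 'cV[R]_k) : R := (u^T *m v) 0 0.

Definition xstar (R : rcfType) (m n : nat) (A : 'M[R]_(m, n)) (b : 'cV[R]_m)
  : 'cV[R]_n := invmx (A^T *m A) *m (A^T *m b).

Definition alm_step (R : rcfType) (m n : nat) (A : 'M[R]_(m, n))
  (b : 'cV[R]_m) (c : 'cV[R]_n) (eta : R)
  (s : 'cV[R]_n * 'cV[R]_m * 'cV[R]_m * R) :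
  'cV[R]_n * 'cV[R]_m * 'cV[R]_m * R :=
  let: (x, lam, y, t) := s in
  let x' := invmx (A^T *m A) *m (A^T *m b - eta^-1 *: (A^T *m y + c)) in
  let lam' := y + eta *: (A *m x' - b) in
  let t' := (1 + Num.sqrt (1 + 4 * t ^+ 2)) / 2 in
  let y' := lam' + ((t - 1) / t') *: (lam' - lam) + (t / t') *: (lam' - y) in
  (x', lam', y', t').

(* Iterates, starting from x_0 = 0 (unused), lambda_0 = lam0, y_0 = 0, t_0 = 1. *)
Fixpoint alm_state (R : rcfType) (m n : nat) (A : 'M[R]_(m, n))
  (b : 'cV[R]_m) (c : 'cV[R]_n) (eta : R) (lam0 : 'cV[R]_m) (k : nat) :
  'cV[R]_n * 'cV[R]_m * 'cV[R]_m * R :=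
  match k with
  | 0 => (0, lam0, 0, 1)
  | k'.+1 => alm_step A b c eta (alm_state A b c eta lam0 k')
  end.

Definition alm_x R m n A b c eta lam0 k := (@alm_state R m n A b c eta lam0 k).1.1.1.
Definition alm_lam R m n A b c eta lam0 k := (@alm_state R m n A b c eta lam0 k).1.1.2.
Definition alm_y R m n A b c eta lam0 k := (@alm_state R m n A b c eta lam0 k).1.2.
Definition alm_t R m n A b c eta lam0 k := (@alm_state R m n A b c eta lam0 k).2.

Definition dual_optimal (R : rcfType) (m n : nat) (A : 'M[R]_(m, n))
  (b : 'cV[R]_m) (c : 'cV[R]_n) (lam : 'cV[R]_m) : Prop :=
  A^T *m lam + c = 0 /\
  forall mu : 'cV[R]_m, A^T *m mu + c = 0 -> - dotv b mu <= - dotv b lam.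

Definition is_norm (R : rcfType) (m : nat) (N : 'cV[R]_m -> R) : Prop :=
  (forall v, 0 <= N v) /\
  (forall v, N v = 0 -> v = 0) /\
  (forall (a : R) v, N (a *: v) = `|a| * N v) /\
  (forall u v, N (u + v) <= N u + N v).

(* Main.v *)
Require Import Defs.
From HB Require Import structures.
From mathcomp Require Import all_boot all_order all_algebra.
From mathcomp Require Import ring lra.
Import Order.TTheory GRing.Theory Num.Theory.
Local Open Scope ring_scope.
Set Implicit Arguments. Unset Strict Implicit.

Lemma dotvDr (R : rcfType) k (u v w : 'cV[R]_k) : dotv u (v + w) = dotv u v + dotv u w.
Proof. by rewrite /dotv mulmxDr mxE. Qed.
Lemma dotvDl (R : rcfType) k (u v w : 'cV[R]_k) : dotv (v + w) u = dotv v u + dotv w u.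
Proof. by rewrite /dotv linearD /= mulmxDl mxE. Qed.
Lemma dotvZr (R : rcfType) k (a : R) (u v : 'cV[R]_k) : dotv u (a *: v) = a * dotv u v.
Proof. by rewrite /dotv -scalemxAr mxE. Qed.
Lemma dotvC (R : rcfType) k (u v : 'cV[R]_k) : dotv u v = dotv v u.
Proof. by rewrite /dotv -[in LHS](trmxK (u^T *m v)) trmx_mul trmxK mxE. Qed.
Lemma dotv_mul (R : rcfType) p q (A : 'M[R]_(p, q)) (u : 'cV[R]_p) (v : 'cV[R]_q) :
  dotv u (A *m v) = dotv (A^T *m u) v.
Proof. by rewrite /dotv trmx_mul trmxK mulmxA. Qed.
Lemma dotv_sum (R : rcfType) k (u : 'cV[R]_k) : dotv u u = \sum_i u i 0 ^+ 2.
Proof. rewrite /dotv mxE; apply: eq_bigr => i _; by rewrite mxE expr2. Qed.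
Lemma dotv_ge0 (R : rcfType) k (u : 'cV[R]_k) : 0 <= dotv u u.
Proof. rewrite dotv_sum; apply: sumr_ge0 => i _; exact: sqr_ge0. Qed.
Lemma dotv_eq0 (R : rcfType) k (u : 'cV[R]_k) : dotv u u = 0 -> u = 0.
Proof.
rewrite dotv_sum => H; apply/matrixP => i j; rewrite ord1 mxE.
have := psumr_eq0P (fun i _ => sqr_ge0 (u i 0)) H (i:=i) isT.
by move/eqP; rewrite sqrf_eq0 => /eqP.
Qed.

Lemma colinj (R : rcfType) (m n : nat) (A : 'M[R]_(m, n)) (hrank : \rank A = n)
  (z : 'cV[R]_n) : A *m z = 0 -> z = 0.
Proof.
move=> H.
have hf : row_free A^T by rewrite /row_free mxrank_tr hrank.
have : z^T *m A^T == 0 by rewrite -trmx_mul H trmx0.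
rewrite (mulmx_free_eq0 _ hf) => /eqP Hz.
by rewrite -[z]trmxK Hz trmx0.
Qed.

Lemma Gunit (R : rcfType) (m n : nat) (A : 'M[R]_(m, n)) (hrank : \rank A = n) :
  A^T *m A \in unitmx.
Proof.
rewrite -row_free_unit; apply: inj_row_free => v Hv.
have H1 : dotv (A *m v^T) (A *m v^T) = 0.
  by rewrite dotv_mul mulmxA dotvC /dotv trmxK mulmxA Hv mul0mx mxE.
have := colinj hrank (dotv_eq0 H1).
by move=> H; rewrite -[v]trmxK H trmx0.
Qed.


Lemma tS (R : rcfType) m n (A : 'M[R]_(m, n)) b c eta lam0 k :
  alm_t A b c eta lam0 k.+1 = (1 + Num.sqrt (1 + 4 * alm_t A b c eta lam0 k ^+ 2)) / 2.
Proof. rewrite /alm_t /=; by case: (alm_state A b c eta lam0 k) => [[[? ?] ?] ?]. Qed.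
Lemma xS (R : rcfType) m n (A : 'M[R]_(m, n)) b c eta lam0 k :
  alm_x A b c eta lam0 k.+1 =
  invmx (A^T *m A) *m (A^T *m b - eta^-1 *: (A^T *m alm_y A b c eta lam0 k + c)).
Proof. rewrite /alm_x /alm_y /=; by case: (alm_state A b c eta lam0 k) => [[[? ?] ?] ?]. Qed.
Lemma lamS (R : rcfType) m n (A : 'M[R]_(m, n)) b c eta lam0 k :
  alm_lam A b c eta lam0 k.+1 =
  alm_y A b c eta lam0 k + eta *: (A *m alm_x A b c eta lam0 k.+1 - b).
Proof. rewrite /alm_x /alm_y /alm_lam /=; by case: (alm_state A b c eta lam0 k) => [[[? ?] ?] ?]. Qed.
Lemma yS (R : rcfType) m n (A : 'M[R]_(m, n)) b c eta lam0 k :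
  let l := alm_lam A b c eta lam0 in let t := alm_t A b c eta lam0 in
  alm_y A b c eta lam0 k.+1 =
  l k.+1 + ((t k - 1) / t k.+1) *: (l k.+1 - l k) + (t k / t k.+1) *: (l k.+1 - alm_y A b c eta lam0 k).
Proof. rewrite /alm_t /alm_y /alm_lam /=; by case: (alm_state A b c eta lam0 k) => [[[? ?] ?] ?]. Qed.

Lemma t_bounds (R : rcfType) m n (A : 'M[R]_(m, n)) b c eta lam0 k :
  1 + k%:R / 2 <= alm_t A b c eta lam0 k <= 1 + k%:R.
Proof.
elim: k => [|k IH]; first by rewrite /alm_t /= mul0r addr0 lexx.
rewrite tS; set t := alm_t _ _ _ _ _ k in IH *.
have hs0 : 0 <= Num.sqrt (1 + 4 * t ^+ 2) by exact: sqrtr_ge0.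
have hs2 : Num.sqrt (1 + 4 * t ^+ 2) ^+ 2 = 1 + 4 * t ^+ 2.
  by rewrite sqr_sqrtr // addr_ge0 // mulr_ge0 // sqr_ge0.
set s := Num.sqrt _ in hs0 hs2 *.
move/andP: IH => [h1 h2].
have ht : 0 <= t by apply: le_trans h1; rewrite addr_ge0 // divr_ge0.
have hsl : 2 * t <= s by nra.
have hsu : s <= 1 + 2 * t by nra.
rewrite -natr1; apply/andP; split; lra.
Qed.

Lemma lam_feas (R : rcfType) m n (A : 'M[R]_(m, n)) b c eta lam0 k :
  A^T *m A \in unitmx -> 0 < eta ->
  A^T *m alm_lam A b c eta lam0 k.+1 = - c.
Proof.
move=> hG he.
have hK (v : 'cV[R]_n) : A^T *m (A *m (invmx (A^T *m A) *m v)) = v.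
  by rewrite !mulmxA (mulmxV hG) mul1mx.
rewrite lamS xS mulmxDr -scalemxAr [A^T *m (_ - b)]mulmxBr hK.
set u := A^T *m b; set w := A^T *m alm_y _ _ _ _ _ _.
rewrite addrAC subrr add0r scalerN scalerKV ?lt0r_neq0 //.
by rewrite opprD addrA subrr add0r.
Qed.

Lemma y_inv (R : rcfType) m n (A : 'M[R]_(m, n)) b c eta lam0 k :
  A^T *m A \in unitmx -> 0 < eta ->
  A^T *m alm_y A b c eta lam0 k + c =
  ((-1) ^+ k / alm_t A b c eta lam0 k) *: c.
Proof.
move=> hG he.
elim: k => [|k IH].
  by rewrite /alm_y /alm_t /= mulmx0 add0r expr0 invr1 mulr1 scale1r.
have tpos j : 0 < alm_t A b c eta lam0 j.
  by have /andP[h _] := t_bounds A b c eta lam0 j; apply: lt_le_trans h; rewrite ltr_wpDr // divr_ge0.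
rewrite yS /= !mulmxDr -!scalemxAr !mulmxBr (lam_feas _ _ _ _ hG he).
have -> : ((alm_t A b c eta lam0 k - 1) / alm_t A b c eta lam0 k.+1) *:
     (- c - A^T *m alm_lam A b c eta lam0 k) = 0.
  case: k IH => [|k] _.
    by rewrite /alm_t /= subrr mul0r scale0r.
  by rewrite (lam_feas _ _ _ _ hG he) subrr scaler0.
have -> : A^T *m alm_y A b c eta lam0 k = ((-1) ^+ k / alm_t A b c eta lam0 k) *: c - c.
  by rewrite -IH addrK.
set s := (_ / alm_t _ _ _ _ _ k).
have -> : - c - (s *: c - c) = - (s *: c) by rewrite opprB addrA addNr add0r.
rewrite addr0 addrAC addNr add0r scalerN scalerA -scaleNr; congr (_ *: _).
rewrite /s exprS.
have h1 := tpos k; have h2 := tpos k.+1.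
field; apply/andP; split; exact: lt0r_neq0.
Qed.

Lemma aux_bounds (R : rcfType) (q e T t : R) : 0 <= q -> 0 < e -> 0 < t ->
  T / 2 <= t <= T -> q / (e * T) <= q / (e * t) /\ q / (e * t) <= 2 * q / (e * T).
Proof.
move=> hq he ht /andP[h1 h2].
have hT : 0 < T by lra.
split.
  apply: ler_wpM2l => //; rewrite lef_pV2 ?posrE ?mulr_gt0 //.
  by rewrite ler_pM2l.
suff H : q / (e * t) <= q / (e * (T / 2)).
  apply: (le_trans H); rewrite le_eqVlt; apply/orP; left; apply/eqP.
  by field; apply/andP; split; exact: lt0r_neq0.
apply: ler_wpM2l => //; rewrite lef_pV2 ?posrE ?mulr_gt0 ?divr_gt0 ?invr_gt0 //.
by rewrite ler_pM2l.
Qed.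

Lemma quad_expand (R : rcfType) k (u v : 'cV[R]_k) :
  dotv (u + v) (u + v) = dotv u u + 2 * dotv u v + dotv v v.
Proof. rewrite !dotvDr !dotvDl [dotv v u]dotvC. set a := dotv u u. set p := dotv u v. set q := dotv v v. ring. Qed.

Lemma dotvZl (R : rcfType) k (a : R) (u v : 'cV[R]_k) : dotv (a *: u) v = a * dotv u v.
Proof. by rewrite dotvC dotvZr dotvC. Qed.
Lemma dotv0l (R : rcfType) k (v : 'cV[R]_k) : dotv 0 v = 0.
Proof. by rewrite /dotv trmx0 mul0mx mxE. Qed.
Lemma dotvNl (R : rcfType) k (u v : 'cV[R]_k) : dotv (- u) v = - dotv u v.
Proof. by rewrite -scaleN1r dotvZl mulN1r. Qed.

Theorem mainTheorem13 (R : rcfType) (m n : nat) (A : 'M[R]_(m, n))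
  (b : 'cV[R]_m) (c : 'cV[R]_n) (eta : R) (lam0 : 'cV[R]_m)
  (hmn : (n < m)%N) (hrank : \rank A = n)
  (hb : exists x0 : 'cV[R]_n, A *m x0 = b)
  (heta : 0 < eta) :
  let x := alm_x A b c eta lam0 in
  let lam := alm_lam A b c eta lam0 in
  let t := alm_t A b c eta lam0 in
  let M := invmx (A^T *m A) in
  (A *m xstar A b = b /\ forall z : 'cV[R]_n, A *m z = b -> z = xstar A b) /\
  (forall (k : nat) (z : 'cV[R]_n),
     dotv c (x k.+1) + dotv (alm_y A b c eta lam0 k) (A *m x k.+1 - b)
       + eta / 2 * dotv (A *m x k.+1 - b) (A *m x k.+1 - b)
     <= dotv c z + dotv (alm_y A b c eta lam0 k) (A *m z - b)
       + eta / 2 * dotv (A *m z - b) (A *m z - b)) /\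
  (forall k : nat, (1 <= k)%N -> dual_optimal A b c (lam k)) /\
  (forall T : nat, (1 <= T)%N ->
     x T = xstar A b - ((-1) ^+ T.-1 / (eta * t T.-1)) *: (M *m c)
     /\ `| dotv c (xstar A b - x T) | = dotv c (M *m c) / (eta * t T.-1)
     /\ (forall N : 'cV[R]_m -> R, is_norm N ->
           N (A *m x T - b) = N (A *m (M *m c)) / (eta * t T.-1))
     /\ (T%:R / 2 <= t T.-1 <= T%:R)
     /\ (c != 0 ->
           0 < dotv c (M *m c)
           /\ dotv c (M *m c) / (eta * T%:R) <= `| dotv c (xstar A b - x T) |
           /\ `| dotv c (xstar A b - x T) | <= 2 * dotv c (M *m c) / (eta * T%:R)
           /\ (forall N : 'cV[R]_m -> R, is_norm N ->
                 0 < N (A *m (M *m c))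
                 /\ N (A *m (M *m c)) / (eta * T%:R) <= N (A *m x T - b)
                 /\ N (A *m x T - b) <= 2 * N (A *m (M *m c)) / (eta * T%:R)))).
Proof.
move=> x lam t M; rewrite {}/x {}/lam {}/t {}/M.
have hG := Gunit hrank.
have hMG : invmx (A^T *m A) *m (A^T *m A) = 1%:M := mulVmx hG.
have hGM : (A^T *m A) *m invmx (A^T *m A) = 1%:M := mulmxV hG.
have hK (v : 'cV[R]_n) : A^T *m (A *m (invmx (A^T *m A) *m v)) = v.
  by rewrite !mulmxA hGM mul1mx.
case: hb => x0 hx0.
have hxs : xstar A b = x0 by rewrite /xstar -hx0 (mulmxA A^T) mulmxA hMG mul1mx.
have hAxs : A *m xstar A b = b by rewrite hxs.
have tpos j : 0 < alm_t A b c eta lam0 j.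
  by have /andP[h _] := t_bounds A b c eta lam0 j; apply: lt_le_trans h; rewrite ltr_wpDr // divr_ge0.
split.
  split => // z hz; rewrite hxs; apply/eqP; rewrite -subr_eq0; apply/eqP.
  by apply: (colinj hrank); rewrite mulmxBr hz hx0 subrr.
split.
  move=> k z.
  set y := alm_y A b c eta lam0 k; set xk := alm_x A b c eta lam0 k.+1.
  have hgrad : c + A^T *m y + eta *: (A^T *m (A *m xk - b)) = 0.
    rewrite mulmxBr /xk xS hK -/y (addrAC (A^T *m b)) subrr add0r scalerN scalerKV ?lt0r_neq0 //.
    by rewrite [c + _]addrC subrr.
  set d := z - xk; have hz : z = xk + d by rewrite addrC subrK.
  set r := A *m xk - b.
  have e1 : A *m z - b = r + A *m d by rewrite hz mulmxDr addrAC.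
  have e2 : dotv c z = dotv c xk + dotv c d by rewrite hz dotvDr.
  have hg : dotv c d + dotv y (A *m d) + eta * dotv r (A *m d) = 0.
    by rewrite dotv_mul dotv_mul -dotvZl -!dotvDl hgrad dotv0l.
  have hq := dotv_ge0 (A *m d).
  rewrite e1 e2 [dotv y (r + _)]dotvDr (quad_expand r (A *m d)).
  have h0 : 0 <= eta / 2 * dotv (A *m d) (A *m d) by rewrite mulr_ge0 // divr_ge0 // ltW.
  move: hg h0.
  set p := dotv r (A *m d); set y1 := dotv y (A *m d); set q := dotv (A *m d) (A *m d).
  set a1 := dotv c xk; set a2 := dotv y r; set a3 := dotv r r; set a4 := dotv c d.
  move=> hg h0.
  have -> : a1 + a4 + (a2 + y1) + eta / 2 * (a3 + 2 * p + q) =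
            a1 + a2 + eta / 2 * a3 + eta / 2 * q + (a4 + y1 + eta * p).
    by field.
  by rewrite hg addr0 lerDl.
split.
  case=> // k _; split; first by rewrite lam_feas // addNr.
  have e u : A^T *m u + c = 0 -> dotv b u = dotv (- c) x0.
    move=> h; have hu : A^T *m u = - c by apply/eqP; rewrite -addr_eq0 h.
    by rewrite -hx0 dotvC dotv_mul hu.
  move=> mu hmu; rewrite (e mu hmu) (e _ _) //; by rewrite lam_feas // addNr.
case=> // k _.
have E1 : k.+1.-1 = k by [].
rewrite E1.
set tk := alm_t A b c eta lam0 k.
have htk : 0 < tk := tpos k.
set s := (-1) ^+ k / (eta * tk).
set M := invmx (A^T *m A).
have hx : alm_x A b c eta lam0 k.+1 = xstar A b - s *: (M *m c).
  rewrite xS mulmxBr -scalemxAr y_inv // -scalemxAr scalerA /xstar.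
  congr (_ - _ *: _); rewrite /s /tk; field.
  by apply/andP; split; exact: lt0r_neq0.
have hs : `|s| = (eta * tk)^-1.
  by rewrite /s normrM normfV normrX normrN normr1 expr1n mul1r ger0_norm // mulr_ge0 // ltW.
set q := dotv c (M *m c).
have hq : q = dotv (A *m (M *m c)) (A *m (M *m c)).
  by rewrite /q dotv_mul !mulmxA hGM mul1mx dotvC.
have hq0 : 0 <= q by rewrite hq dotv_ge0.
have hdiff : xstar A b - alm_x A b c eta lam0 k.+1 = s *: (M *m c).
  by rewrite hx opprB addrC subrK.
have hab : `| dotv c (xstar A b - alm_x A b c eta lam0 k.+1) | = q / (eta * tk).
  by rewrite hdiff dotvZr normrM hs (ger0_norm hq0) mulrC.
have hres : A *m alm_x A b c eta lam0 k.+1 - b = (- s) *: (A *m (M *m c)).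
  by rewrite hx mulmxBr hAxs -scalemxAr addrAC subrr add0r scaleNr.
have hN (N : 'cV[R]_m -> R) : is_norm N ->
    N (A *m alm_x A b c eta lam0 k.+1 - b) = N (A *m (M *m c)) / (eta * tk).
  by move=> [_ [_ [hZ _]]]; rewrite hres hZ normrN hs mulrC.
have htb : k.+1%:R / 2 <= tk <= k.+1%:R.
  have /andP[h1 h2] := t_bounds A b c eta lam0 k.
  rewrite -natr1; apply/andP; split; rewrite -/tk; lra.
split => //; split => //; split => //; split => //.
move=> hc.
have hMc : M *m c != 0.
  apply/eqP => h; move/eqP: hc; apply; by rewrite -[c]hK h !mulmx0.
have hAMc : A *m (M *m c) != 0.
  by apply/eqP => h; move/eqP: hMc; apply; apply: (colinj hrank); exact: h.
have hqp : 0 < q.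
  rewrite lt_def hq0 andbT; apply/eqP => h; move/eqP: hAMc; apply.
  by apply: dotv_eq0; rewrite -hq.
split => //.
rewrite hab; have [b1 b2] := aux_bounds hq0 heta htk htb.
split => //; split => //.
move=> N hNn; rewrite hN //.
have hN0 : 0 < N (A *m (M *m c)).
  case: hNn => [hge [h0 _]]; rewrite lt_def hge andbT; apply/eqP => h.
  by move/eqP: hAMc; apply; exact: h0.
have [c1 c2] := aux_bounds (ltW hN0) heta htk htb.
by [].
Qed.
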